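(* In any execution of $\mathcal{U}$, let $p$ be a process and suppose $H_p = (t, r)$ at time $T$ with $r \neq NULL$. Then for all times $T' \geq T$, if $H_p.time = t$ at $T'$ then $H_p.response = r$ at $T'$.
   Context: Model: an asynchronous shared-memory system with possibly infinitely many processes, any of which may crash, communicating via atomic shared objects. A fetch-and-increment (F\&I) object stores an integer; F\&I$(C)$ atomically returns the current value and increments it. A generalized-compare-and-swap (GCAS) object $O$ stores a value and supports Read$(O)$ and GCAS$(c, O, v_1, v_2)$, which atomically does: if $c(\text{current value of } O, v_1)$ holds then set $O := v_2$ and return true, else return false. Tuples are compared componentwise for $=$; GCAS$(>, A, (t,-,-), v)$ succeeds iff the time field of $A$ is strictly greater than $t$. Implemented type $\mathcal{T} = (OP, RES, Q, \delta)$ with initial state $s_0$; a procedure $apply_{\mathcal{T}}(o,s)$ returns some $(s',r)$ with $(s,o,s',r)\in\delta$. $NULL$ is a value different from every response of $\mathcal{T}$, and $NOOP$ is a name different from every operation of $\mathcal{T}$. Algorithm $\mathcal{U}$: each process $p$ owns a GCAS object $H_p$ with fields $(time, response)$. Shared objects: F\&I object $C$, initially $1$; GCAS object $A$ with fields $(time, op, ptr)$, initially $(0, NOOP, h(NOOP))$, where $h(NOOP)$ is a pointer to an immutable location containing $(0,\perp)$; GCAS object $S$ with fields $(time, state, response, ptr)$, initially $(0, s_0, \perp, h(NOOP))$. Process $p$ performs operation $o$ by calling DoOp$(o)$: (1) DoOp$(o)$ invoked; (2) $t := $ F\&I$(C)$; (3) $H_p := (t, NULL)$; (4) while $H_p =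 (t, NULL)$ do: (5) $(t^*, s^*, r^*, roptr^* ) := S$; (6) GCAS$(=, *roptr^*, (t^*, NULL), (t^*, r^* ))$; (7) GCAS$(>, A, (t,-,-), (t, o, \&H_p))$; (8) $(t', o', roptr') := A$; (9) $(\hat t, \hat r) := *roptr'$; (10) if $(\hat t,\hat r) = (t', NULL)$ then (11) $(s', r') := apply_{\mathcal{T}}(o', s^* )$; (12) GCAS$(=, S, (t^*,s^*,r^*,roptr^* ), (t', s', r', roptr'))$; (13) else GCAS$(=, A, (t', o', roptr'), (t, o, \&H_p))$; end while; (14) return $H_p.response$. *)

(* Defs.v *)
From Stdlib Require Import Arith ClassicalEpsilon.

(* Values of a response field: NULL, the initial bottom value, or a response
   of the implemented type T. *)
Inductive Resp (RES : Type) : Type :=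
| RNull : Resp RES
| RBot  : Resp RES
| RVal  : RES -> Resp RES.
Arguments RNull {RES}.
Arguments RBot {RES}.
Arguments RVal {RES} _.

(* Pointers: h(NOOP) (immutable location containing (0,bot)) or &H_q. *)
Inductive Ptr (P : Type) : Type :=
| PNoop : Ptr P
| PH    : P -> Ptr P.
Arguments PNoop {P}.
Arguments PH {P} _.

Definition upd {P X : Type} (f : P -> X) (p : P) (x : X) : P -> X :=
  fun q => if excluded_middle_informative (q = p) then x else f q.

Section AlgorithmU.
Variables (P OP RES Q : Type).
(* transition relation delta of T: delta s o s' r  <->  (s,o,s',r) \in delta *)
Variable delta : Q -> OP -> Q -> RES -> Prop.
Variable s0 : Q.

(* The op field of A: None encodes NOOP, Some o the operation o. *)
Definition Afield := (nat * option OP * Ptr P)%type.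
Definition Sfield := (nat * Q * Resp RES * Ptr P)%type.
Definition Hfield := (nat * Resp RES)%type.

(* Local state of a process: program counter (the line it will execute
   next) together with its live local variables. *)
Inductive Loc : Type :=
| Idle
| At2  (o : OP)
| At3  (o : OP) (t : nat)
| At4  (o : OP) (t : nat)
| At5  (o : OP) (t : nat)
| At6  (o : OP) (t ts : nat) (ss : Q) (rs : Resp RES) (ps : Ptr P)
| At7  (o : OP) (t ts : nat) (ss : Q) (rs : Resp RES) (ps : Ptr P)
| At8  (o : OP) (t ts : nat) (ss : Q) (rs : Resp RES) (ps : Ptr P)
| At9  (o : OP) (t ts : nat) (ss : Q) (rs : Resp RES) (ps : Ptr P)
         (t' : nat) (o' : option OP) (p' : Ptr P)
| At10 (o : OP) (t ts : nat) (ss : Q) (rs : Resp RES) (ps : Ptr P)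
         (t' : nat) (o' : option OP) (p' : Ptr P) (th : nat) (rh : Resp RES)
| At11 (o : OP) (t ts : nat) (ss : Q) (rs : Resp RES) (ps : Ptr P)
         (t' : nat) (o' : option OP) (p' : Ptr P)
| At12 (o : OP) (t ts : nat) (ss : Q) (rs : Resp RES) (ps : Ptr P)
         (t' : nat) (o' : option OP) (p' : Ptr P) (s' : Q) (r' : RES)
| At13 (o : OP) (t t' : nat) (o' : option OP) (p' : Ptr P)
| At14 (o : OP) (t : nat).

Record Config : Type := mkC {
  cC : nat;
  cA : Afield;
  cS : Sfield;
  cH : P -> Hfield;
  cL : P -> Loc }.

Definition init : Config :=
  mkC 1 (0, None, PNoop) (0, s0, RBot, PNoop) (fun _ => (0, RBot)) (fun _ => Idle).

Definition deref (H : P -> Hfield) (x : Ptr P) : Hfield :=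
  match x with PNoop => (0, RBot) | PH q => H q end.

(* One atomic step of process p (one line of the pseudocode). *)
Inductive step (p : P) : Config -> Config -> Prop :=
| st1 : forall C A S H L o, L p = Idle ->
    step p (mkC C A S H L) (mkC C A S H (upd L p (At2 o)))
| st2 : forall C A S H L o, L p = At2 o ->
    step p (mkC C A S H L) (mkC (Datatypes.S C) A S H (upd L p (At3 o C)))
| st3 : forall C A S H L o t, L p = At3 o t ->
    step p (mkC C A S H L) (mkC C A S (upd H p (t, RNull)) (upd L p (At4 o t)))
| st4_loop : forall C A S H L o t, L p = At4 o t -> H p = (t, RNull) ->
    step p (mkC C A S H L) (mkC C A S H (upd L p (At5 o t)))
| st4_exit : forall C A S H L o t, L p = At4 o t -> H p <> (t, RNull) ->
    step p (mkC C A S H L) (mkC C A S H (upd L p (At14 o t)))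
| st5 : forall C A S H L o t ts ss rs ps, L p = At5 o t -> S = (ts, ss, rs, ps) ->
    step p (mkC C A S H L) (mkC C A S H (upd L p (At6 o t ts ss rs ps)))
| st6_succ : forall C A S H L o t ts ss rs ps q, L p = At6 o t ts ss rs ps ->
    ps = PH q -> H q = (ts, RNull) ->
    step p (mkC C A S H L)
           (mkC C A S (upd H q (ts, rs)) (upd L p (At7 o t ts ss rs ps)))
| st6_fail : forall C A S H L o t ts ss rs ps, L p = At6 o t ts ss rs ps ->
    deref H ps <> (ts, RNull) ->
    step p (mkC C A S H L) (mkC C A S H (upd L p (At7 o t ts ss rs ps)))
| st7_succ : forall C A S H L o t ts ss rs ps, L p = At7 o t ts ss rs ps ->
    fst (fst A) > t ->
    step p (mkC C A S H L)
           (mkC C (t, Some o, PH p) S H (upd L p (At8 o t ts ss rs ps)))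
| st7_fail : forall C A S H L o t ts ss rs ps, L p = At7 o t ts ss rs ps ->
    ~ (fst (fst A) > t) ->
    step p (mkC C A S H L) (mkC C A S H (upd L p (At8 o t ts ss rs ps)))
| st8 : forall C A S H L o t ts ss rs ps t' o' p', L p = At8 o t ts ss rs ps ->
    A = (t', o', p') ->
    step p (mkC C A S H L)
           (mkC C A S H (upd L p (At9 o t ts ss rs ps t' o' p')))
| st9 : forall C A S H L o t ts ss rs ps t' o' p' th rh,
    L p = At9 o t ts ss rs ps t' o' p' -> deref H p' = (th, rh) ->
    step p (mkC C A S H L)
           (mkC C A S H (upd L p (At10 o t ts ss rs ps t' o' p' th rh)))
| st10_then : forall C A S H L o t ts ss rs ps t' o' p' th rh,
    L p = At10 o t ts ss rs ps t' o' p' th rh -> (th, rh) = (t', RNull) ->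
    step p (mkC C A S H L)
           (mkC C A S H (upd L p (At11 o t ts ss rs ps t' o' p')))
| st10_else : forall C A S H L o t ts ss rs ps t' o' p' th rh,
    L p = At10 o t ts ss rs ps t' o' p' th rh -> (th, rh) <> (t', RNull) ->
    step p (mkC C A S H L) (mkC C A S H (upd L p (At13 o t t' o' p')))
| st11 : forall C A S H L o t ts ss rs ps t' o1 p' s' r',
    L p = At11 o t ts ss rs ps t' (Some o1) p' -> delta ss o1 s' r' ->
    step p (mkC C A S H L)
           (mkC C A S H (upd L p (At12 o t ts ss rs ps t' (Some o1) p' s' r')))
| st12_succ : forall C A S H L o t ts ss rs ps t' o' p' s' r',
    L p = At12 o t ts ss rs ps t' o' p' s' r' -> S = (ts, ss, rs, ps) ->
    step p (mkC C A S H L) (mkC C A (t', s', RVal r', p') H (upd L p (At4 o t)))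
| st12_fail : forall C A S H L o t ts ss rs ps t' o' p' s' r',
    L p = At12 o t ts ss rs ps t' o' p' s' r' -> S <> (ts, ss, rs, ps) ->
    step p (mkC C A S H L) (mkC C A S H (upd L p (At4 o t)))
| st13_succ : forall C A S H L o t t' o' p', L p = At13 o t t' o' p' ->
    A = (t', o', p') ->
    step p (mkC C A S H L) (mkC C (t, Some o, PH p) S H (upd L p (At4 o t)))
| st13_fail : forall C A S H L o t t' o' p', L p = At13 o t t' o' p' ->
    A <> (t', o', p') ->
    step p (mkC C A S H L) (mkC C A S H (upd L p (At4 o t)))
| st14 : forall C A S H L o t, L p = At14 o t ->
    step p (mkC C A S H L) (mkC C A S H (upd L p Idle)).

(* An execution: configuration at each time n; each transition is a step of
   some process (or nothing happens).  Crashed processes simply take no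
   further steps; the scheduling is arbitrary. *)
Definition is_execution (e : nat -> Config) : Prop :=
  e 0 = init /\
  forall n, e (Datatypes.S n) = e n \/ exists p, step p (e n) (e (Datatypes.S n)).

End AlgorithmU.

(* Main.v *)
Require Import Defs.
From Stdlib Require Import Arith Lia ClassicalEpsilon.

Section Pf.
Variables (P OP RES Q : Type) (delta : Q -> OP -> Q -> RES -> Prop) (s0 : Q).

Lemma upd_eq {X Y : Type} (f : X -> Y) p x : upd f p x p = x.
Proof. unfold upd; destruct excluded_middle_informative; congruence. Qed.
Lemma upd_neq {X Y : Type} (f : X -> Y) p x q : q <> p -> upd f p x q = f q.
Proof. unfold upd; destruct excluded_middle_informative; congruence. Qed.

Definition Inv (c : Config P OP RES Q) : Prop :=
  (forall q, fst (@cH P OP RES Q c q) < @cC P OP RES Q c) /\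
  (forall q o t, @cL P OP RES Q c q = At3 P OP RES Q o t -> fst (@cH P OP RES Q c q) < t /\ t < @cC P OP RES Q c).

Ltac solveL := 
  match goal with
  | |- forall q o t, upd ?L ?p ?x q = _ -> _ =>
      let q := fresh in intros q ? ? Hq;
      destruct (excluded_middle_informative (q = p)) as [->|Hn];
      [rewrite upd_eq in Hq; discriminate | rewrite upd_neq in Hq by exact Hn]
  end.

Lemma Inv_step p c c' : Inv c -> step P OP RES Q delta p c c' -> Inv c'.
Proof.
  intros [I1 I2] Hs; destruct Hs; unfold Inv in *; simpl in *;
    try (split; [exact I1| solveL; eauto]).
  - split; [intros; specialize (I1 q); lia|].
    intros q o0 t Hq.
    destruct (excluded_middle_informative (q = p)) as [->|Hn].
    + rewrite upd_eq in Hq; inversion Hq; subst; split; [apply I1|lia].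
    + rewrite upd_neq in Hq by exact Hn. destruct (I2 _ _ _ Hq); lia.
  - split.
    + intros q. destruct (excluded_middle_informative (q = p)) as [->|Hn].
      * rewrite upd_eq; simpl. match goal with Hl : _ = At3 _ _ _ _ _ _ |- _ => apply (I2 _ _ _ Hl) end.
      * rewrite upd_neq by exact Hn; apply I1.
    + solveL. rewrite upd_neq by exact Hn. eauto.
  - assert (E : forall x, fst (upd H q (ts, rs) x) = fst (H x)).
    { intros x; destruct (excluded_middle_informative (x = q)) as [->|Hn].
      - rewrite upd_eq; match goal with Hh : H q = _ |- _ => rewrite Hh end; reflexivity.
      - rewrite upd_neq by exact Hn; reflexivity. }
    split; [intros x; rewrite E; apply I1|].
    solveL. rewrite E; eauto.
Qed.

Definition Good (p : P) (t : nat) (r : Resp RES) (c : Config P OP RES Q) : Prop :=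
  t <= fst (@cH P OP RES Q c p) /\ (fst (@cH P OP RES Q c p) = t -> snd (@cH P OP RES Q c p) = r).

Lemma Good_step p t r z c c' : r <> RNull -> Inv c -> step P OP RES Q delta z c c' ->
  Good p t r c -> Good p t r c'.
Proof.
  intros Hr [I1 I2] Hs [G1 G2]; destruct Hs; unfold Good in *; simpl in *; auto.
  - destruct (excluded_middle_informative (p = z)) as [->|Hn].
    + rewrite upd_eq; simpl. match goal with Hl : _ = At3 _ _ _ _ _ _ |- _ => destruct (I2 _ _ _ Hl) end; split; intros; lia.
    + rewrite upd_neq by exact Hn; auto.
  - destruct (excluded_middle_informative (p = q)) as [->|Hn].
    + rewrite upd_eq; simpl. match goal with Hh : H q = (_, RNull) |- _ => rewrite Hh in G1, G2 end; simpl in *.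
      split; [lia|]. intros ->. exfalso; apply Hr; symmetry; auto.
    + rewrite upd_neq by exact Hn; auto.
Qed.

End Pf.

Theorem mainTheorem3 (P OP RES Q : Type) (delta : Q -> OP -> Q -> RES -> Prop)
  (s0 : Q) (e : nat -> Config P OP RES Q) :
  @is_execution P OP RES Q delta s0 e ->
  forall (p : P) (T : nat) (t : nat) (r : Resp RES),
    @cH P OP RES Q (e T) p = (t, r) -> r <> @RNull RES ->
    forall T' : nat, T <= T' ->
      fst (@cH P OP RES Q (e T') p) = t -> snd (@cH P OP RES Q (e T') p) = r.
Proof.
  intros [E0 Es] p T t r HT Hr.
  assert (Inv_all : forall n, Inv P OP RES Q (e n)).
  { induction n.
    - rewrite E0; split; simpl; [intros; lia | discriminate].
    - destruct (Es n) as [->|[q Hs]]; auto. eapply Inv_step; eauto. }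
  assert (G : forall k, Good P OP RES Q p t r (e (T + k))).
  { induction k.
    - rewrite Nat.add_0_r; unfold Good; rewrite HT; simpl; split; auto.
    - rewrite Nat.add_succ_r. destruct (Es (T + k)) as [->|[q Hs]]; auto.
      eapply Good_step; eauto. }
  intros T' HT'. replace T' with (T + (T' - T)) by lia. apply G.
Qed.
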